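(* Let $C$ be a convex subset of the Euclidean plane $\mathbb{R}^2$ (not necessarily closed or bounded). Then for every finite point set $P \subset \mathbb{R}^2$, the straight-line drawing of $G_{t}(P,C)$ is a plane graph.
   Context: For a finite set $P \subset \mathbb{R}^2$ and a set $C \subseteq \mathbb{R}^2$, $G_{t}(P,C)$ is the graph with vertex set $P$ in which two distinct points $u,v \in P$ are adjacent if and only if there is a translate $C+\mathbf{v} = \{x+\mathbf{v} : x \in C\}$ (for some $\mathbf{v}\in\mathbb{R}^2$) with $P \cap (C+\mathbf{v}) = \{u,v\}$. The graph is drawn with each vertex at its point and each edge as the closed straight-line segment between its endpoints. A drawing is a plane graph if (1) no vertex lies on an edge of which it is not an endpoint, and (2) no two edges cross, i.e., two edges may intersect only at a common endpoint. *)

(* Defs.v *)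
From mathcomp Require Import all_boot all_order all_algebra.
From mathcomp Require Import reals.
Set Implicit Arguments. Unset Strict Implicit. Unset Printing Implicit Defensive.
Import Order.TTheory GRing.Theory Num.Theory.
Local Open Scope ring_scope.

Section Plane.
Variable R : realType.

Definition pt := (R * R)%type.

Definition comb (x y : pt) (t : R) : pt :=
  ((1 - t) * x.1 + t * y.1, (1 - t) * x.2 + t * y.2).

Definition convex (C : pt -> Prop) : Prop :=
  forall x y t, C x -> C y -> 0 <= t <= 1 -> C (comb x y t).

Definition translate (C : pt -> Prop) (v : pt) : pt -> Prop :=
  fun x => exists c, C c /\ x = (c.1 + v.1, c.2 + v.2).

Definition Gt_adj (P : seq pt) (C : pt -> Prop) (u v : pt) : Prop :=
  u \in P /\ v \in P /\ u <> v /\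
  exists w : pt, forall p, p \in P -> (translate C w p <-> (p = u \/ p = v)).

Definition on_seg (u v z : pt) : Prop :=
  exists t : R, 0 <= t <= 1 /\ z = comb u v t.

Definition plane_drawing (P : seq pt) (adj : pt -> pt -> Prop) : Prop :=
  (forall u v w, adj u v -> w \in P -> w <> u -> w <> v -> ~ on_seg u v w) /\
  (forall u v x y z, adj u v -> adj x y ->
     ~ ((u = x /\ v = y) \/ (u = y /\ v = x)) ->
     on_seg u v z -> on_seg x y z ->
     (z = u \/ z = v) /\ (z = x \/ z = y)).
End Plane.

(* Main.v *)
Require Import Defs.
From mathcomp Require Import all_boot all_order all_algebra.
From mathcomp Require Import reals.
From mathcomp Require Import ring lra.
Set Implicit Arguments. Unset Strict Implicit. Unset Printing Implicit Defensive.
Import Order.TTheory GRing.Theory Num.Theory.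
Local Open Scope ring_scope.

Lemma pairE (R : realType) (a b : pt R) : a.1 = b.1 -> a.2 = b.2 -> a = b.
Proof. by case: a b => ? ? [? ?] /= -> ->. Qed.

Lemma translate_convex (R : realType) (C : pt R -> Prop) w :
  convex C -> convex (translate C w).
Proof.
move=> cC x y t [c [Cc ->]] [c' [Cc' ->]] ht.
exists (comb c c' t); split; first exact: cC.
apply: pairE; rewrite /comb /=; ring.
Qed.

Lemma seg_in (R : realType) (K : pt R -> Prop) u v w :
  convex K -> K u -> K v -> on_seg u v w -> K w.
Proof. by move=> cK Ku Kv [r [hr ->]]; apply: (cK). Qed.

Lemma core (R : realType) (K : pt R -> Prop) (z1 z2 p1 p2 q1 q2 a b s t : R)
  (P1 P2 Q1 Q2 X U : pt R) :
  convex K -> 0 <= a -> 0 <= b -> 0 <= s <= 1 -> 0 <= t <= 1 ->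
  P1 = (z1 - s * p1, z2 - s * p2) -> P2 = (z1 + (1-s) * p1, z2 + (1-s) * p2) ->
  Q1 = (z1 + a * p1 + b * q1 - t * q1, z2 + a * p2 + b * q2 - t * q2) ->
  Q2 = (z1 + a * p1 + b * q1 + (1-t) * q1, z2 + a * p2 + b * q2 + (1-t) * q2) ->
  X = (z1 + (1-t) * q1, z2 + (1-t) * q2) ->
  U = (z1 + a * p1 + b * q1 - s * p1, z2 + a * p2 + b * q2 - s * p2) ->
  K P1 -> K P2 -> K Q1 -> K Q2 -> K X \/ K U.
Proof.
move=> cK a0 b0 hs ht eP1 eP2 eQ1 eQ2 eX eU KP1 KP2 KQ1 KQ2.
have [h|h] := lerP (a * (1-t)) (s * b).
- left.
  have [bz|bnz] := eqVneq b 0.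
  + have : a * (1-t) = 0 by subst b; nra.
    move/eqP; rewrite mulf_eq0 => /orP[/eqP az|/eqP tz].
    * suff -> : X = Q2 by [].
      rewrite eX eQ2; subst a b; apply: pairE => /=; ring.
    * suff -> : X = comb P1 P2 s by apply: (cK).
      have t1 : t = 1 by lra.
      rewrite eX eP1 eP2 /comb t1; apply: pairE => /=; ring.
  + have bpos : 0 < b by rewrite lt_neqAle eq_sym bnz b0.
    have bt : b + 1 - t != 0 by apply/eqP; lra.
    pose k := (1-t) * a/b.
    have kb : k * b = (1-t) * a by rewrite /k divfK.
    have k0 : 0 <= k by rewrite /k divr_ge0 // mulr_ge0 //; lra.
    have ks : k <= s by nra.
    pose c := (1-t)/(b+1-t).
    have cb : c * (b+1-t) = 1-t by rewrite /c divfK.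
    have c0 : 0 <= c by rewrite /c divr_ge0 //; lra.
    have c1 : c <= 1 by nra.
    suff -> : X = comb (comb P1 P2 (s - k)) Q2 c.
      apply: (cK); [apply: (cK) => //; lra | done | lra].
    rewrite eX eP1 eP2 eQ2 /comb /c /k; apply: pairE => /=; field; lra.
- right.
  have sb0 : 0 <= s * b by apply: mulr_ge0; lra.
  have apos : 0 < a by nra.
  have anz : a != 0 by apply/eqP; lra.
  have sa : s + a != 0 by apply/eqP; lra.
  pose k := b * s/a.
  have ka : k * a = b * s by rewrite /k divfK.
  have k0 : 0 <= k by rewrite /k divr_ge0 // mulr_ge0 //; lra.
  have k1 : k <= 1 - t by nra.
  pose c := a/(s+a).
  have cb : c * (s+a) = a by rewrite /c divfK.
  have c0 : 0 <= c by rewrite /c divr_ge0 //; lra.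
  have c1 : c <= 1 by nra.
  suff -> : U = comb P1 (comb Q1 Q2 (t + k)) c.
    apply: (cK); [done | apply: (cK) => //; lra | lra].
  rewrite eU eP1 eQ1 eQ2 /comb /c /k; apply: pairE => /=; field; lra.
Qed.

Ltac peq := apply: pairE => /=; ring.

Lemma cross4 (R : realType) (K : pt R -> Prop) (z1 z2 p1 p2 q1 q2 a b s t : R)
  (P1 P2 Q1 Q2 X1 X2 U1 U2 : pt R) :
  convex K -> 0 <= s <= 1 -> 0 <= t <= 1 ->
  P1 = (z1 - s * p1, z2 - s * p2) -> P2 = (z1 + (1-s) * p1, z2 + (1-s) * p2) ->
  Q1 = (z1 + a * p1 + b * q1 - t * q1, z2 + a * p2 + b * q2 - t * q2) ->
  Q2 = (z1 + a * p1 + b * q1 + (1-t) * q1, z2 + a * p2 + b * q2 + (1-t) * q2) ->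
  X1 = (z1 - t * q1, z2 - t * q2) ->
  X2 = (z1 + (1-t) * q1, z2 + (1-t) * q2) ->
  U1 = (z1 + a * p1 + b * q1 - s * p1, z2 + a * p2 + b * q2 - s * p2) ->
  U2 = (z1 + a * p1 + b * q1 + (1-s) * p1, z2 + a * p2 + b * q2 + (1-s) * p2) ->
  K P1 -> K P2 -> K Q1 -> K Q2 -> K X1 \/ K X2 \/ K U1 \/ K U2.
Proof.
move=> cK hs ht eP1 eP2 eQ1 eQ2 eX1 eX2 eU1 eU2 KP1 KP2 KQ1 KQ2.
have hs' : 0 <= 1 - s <= 1 by lra.
have ht' : 0 <= 1 - t <= 1 by lra.
have [a0|a0] := lerP 0 a; have [b0|b0] := lerP 0 b.
- have [H|H] := core cK a0 b0 hs ht eP1 eP2 eQ1 eQ2 eX2 eU1 KP1 KP2 KQ1 KQ2; tauto.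
- have a0' : 0 <= - b by lra.
  have [H|H] := @core R K z1 z2 p1 p2 (-q1) (-q2) a (-b) s (1-t) P1 P2 Q2 Q1 X1 U1
    cK a0 a0' hs ht' eP1 eP2
    ltac:(rewrite eQ2; peq) ltac:(rewrite eQ1; peq)
    ltac:(rewrite eX1; peq) ltac:(rewrite eU1; peq) KP1 KP2 KQ2 KQ1; tauto.
- have a0' : 0 <= - a by lra.
  have [H|H] := @core R K z1 z2 (-p1) (-p2) q1 q2 (-a) b (1-s) t P2 P1 Q1 Q2 X2 U2
    cK a0' b0 hs' ht
    ltac:(rewrite eP2; peq) ltac:(rewrite eP1; peq)
    ltac:(rewrite eQ1; peq) ltac:(rewrite eQ2; peq)
    ltac:(rewrite eX2; peq) ltac:(rewrite eU2; peq) KP2 KP1 KQ1 KQ2; tauto.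
- have a0' : 0 <= - a by lra.
  have b0' : 0 <= - b by lra.
  have [H|H] := @core R K z1 z2 (-p1) (-p2) (-q1) (-q2) (-a) (-b) (1-s) (1-t) P2 P1 Q2 Q1 X1 U2
    cK a0' b0' hs' ht'
    ltac:(rewrite eP2; peq) ltac:(rewrite eP1; peq)
    ltac:(rewrite eQ2; peq) ltac:(rewrite eQ1; peq)
    ltac:(rewrite eX1; peq) ltac:(rewrite eU2; peq) KP2 KP1 KQ2 KQ1; tauto.
Qed.

Lemma shift (R : realType) (C : pt R -> Prop) (wa wb w : pt R) :
  translate C wb w -> translate C wa (w.1 + (wa.1 - wb.1), w.2 + (wa.2 - wb.2)).
Proof. by case=> c [Cc ->]; exists c; split => //; peq. Qed.

Lemma unshift (R : realType) (C : pt R -> Prop) (wa wb w : pt R) :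
  translate C wa (w.1 + (wa.1 - wb.1), w.2 + (wa.2 - wb.2)) -> translate C wb w.
Proof.
case=> c [Cc e]; exists c; split => //.
have /= e1 := congr1 fst e; have /= e2 := congr1 snd e.
apply: pairE => /=; lra.
Qed.

Lemma indep (R : realType) (p1 p2 q1 q2 sg ta : R) :
  sg * p1 + ta * q1 = 0 -> sg * p2 + ta * q2 = 0 -> p1 * q2 - p2 * q1 != 0 -> sg = 0.
Proof.
move=> h1 h2 hd.
have E : sg * (p1 * q2 - p2 * q1) = (sg * p1 + ta * q1) * q2 - (sg * p2 + ta * q2) * q1 by ring.
move: E; rewrite h1 h2 !mul0r subr0 => /eqP; rewrite mulf_eq0 (negbTE hd) orbF.
by move/eqP.
Qed.

Lemma line_seg (R : realType) (x1 x2 q1 q2 l1 l2 l : R) (A B W : pt R) :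
  A = (x1 + l1 * q1, x2 + l1 * q2) -> B = (x1 + l2 * q1, x2 + l2 * q2) ->
  W = (x1 + l * q1, x2 + l * q2) -> (l1 <= l <= l2 \/ l2 <= l <= l1) ->
  on_seg A B W.
Proof.
move=> eA eB eW hl.
have [e|ne] := eqVneq l1 l2.
  exists 0; split; first by rewrite lexx ler01.
  have el : l = l1 by lra.
  rewrite eW eA eB el /comb; peq.
have ne' : l2 - l1 != 0 by rewrite subr_eq0 eq_sym.
pose r := (l - l1) / (l2 - l1).
have hr : r * (l2 - l1) = l - l1 by rewrite /r divfK.
exists r; split.
  have [h|h] := lerP l1 l2.
  - have h' : l1 < l2 by rewrite lt_neqAle ne h.
    apply/andP; split; nra.
  - apply/andP; split; nra.
have el : l = l1 + r * (l2 - l1) by lra.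
rewrite eW eA eB el /comb; peq.
Qed.

Lemma line_eq (R : realType) (x1 x2 q1 q2 l1 l2 : R) (A B : pt R) :
  A = (x1 + l1 * q1, x2 + l1 * q2) -> B = (x1 + l2 * q1, x2 + l2 * q2) ->
  q1 * q1 + q2 * q2 != 0 -> A = B -> l1 = l2.
Proof.
move=> eA eB hq e; rewrite eA eB in e.
have /= e1 := congr1 fst e; have /= e2 := congr1 snd e.
have h1 : (l1 - l2) * q1 = 0 by lra.
have h2 : (l1 - l2) * q2 = 0 by lra.
have E : (l1 - l2) * (q1 * q1 + q2 * q2) = ((l1 - l2) * q1) * q1 + ((l1 - l2) * q2) * q2 by ring.
move: E; rewrite h1 h2 !mul0r addr0 => /eqP; rewrite mulf_eq0 (negbTE hq) orbF.
rewrite subr_eq0; by move/eqP.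
Qed.

Lemma oneD (R : realType) (m n t : R) :
  0 <= t <= 1 -> (m <= t <= n \/ n <= t <= m) ->
  ((m <= 0 <= n \/ n <= 0 <= m) -> (0 = m \/ 0 = n)) ->
  ((m <= 1 <= n \/ n <= 1 <= m) -> (1 = m \/ 1 = n)) ->
  ((0 <= m <= 1 \/ 1 <= m <= 0) -> (m = 0 \/ m = 1)) ->
  ((0 <= n <= 1 \/ 1 <= n <= 0) -> (n = 0 \/ n = 1)) ->
  ~ ((m = 0 /\ n = 1) \/ (m = 1 /\ n = 0)) ->
  (t = m \/ t = n) /\ (t = 0 \/ t = 1).
Proof. lra. Qed.


Lemma betw (R : realType) (s k t mu : R) : 0 <= s <= 1 -> mu = t - s * k ->
  mu <= t <= mu + k \/ mu + k <= t <= mu.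
Proof.
move=> hs ->; have [k0|k0] := lerP 0 k; [left|right]; apply/andP; split; nra.
Qed.

Lemma part2 (R : realType) (C : pt R -> Prop) (P : seq (pt R)) u v x y z :
  convex C ->
  (forall u v w, Gt_adj P C u v -> w \in P -> on_seg u v w -> w = u \/ w = v) ->
  Gt_adj P C u v -> Gt_adj P C x y ->
  ~ ((u = x /\ v = y) \/ (u = y /\ v = x)) ->
  on_seg u v z -> on_seg x y z ->
  (z = u \/ z = v) /\ (z = x \/ z = y).
Proof.
move=> cC seg1 huv hxy hne [s [hs ez1]] [t [ht ez2]].
have [uP [vP [uv [wa Ha]]]] := huv.
have [xP [yP [xy [wb Hb]]]] := hxy.
have e12 : comb u v s = comb x y t by rewrite -ez1 -ez2.
have /= e1 := congr1 fst e12; have /= e2 := congr1 snd e12.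
have [hdet|hdet] := eqVneq ((v.1 - u.1) * (y.2 - x.2) - (v.2 - u.2) * (y.1 - x.1)) 0.
- have hq : (y.1 - x.1) * (y.1 - x.1) + (y.2 - x.2) * (y.2 - x.2) != 0.
    apply/eqP => h; apply: xy.
    have s1 : 0 <= (y.1 - x.1) * (y.1 - x.1) by rewrite -expr2 sqr_ge0.
    have s2 : 0 <= (y.2 - x.2) * (y.2 - x.2) by rewrite -expr2 sqr_ge0.
    have a1 : (y.1 - x.1) * (y.1 - x.1) = 0 by lra.
    have a2 : (y.2 - x.2) * (y.2 - x.2) = 0 by lra.
    move: a1 a2 => /eqP; rewrite mulf_eq0 orbb subr_eq0 => /eqP a1.
    move=> /eqP; rewrite mulf_eq0 orbb subr_eq0 => /eqP a2.
    by apply: pairE.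
  have [k [hk1 hk2]] : exists k, v.1 - u.1 = k * (y.1 - x.1) /\ v.2 - u.2 = k * (y.2 - x.2).
    exists (((v.1 - u.1) * (y.1 - x.1) + (v.2 - u.2) * (y.2 - x.2)) /
            ((y.1 - x.1) * (y.1 - x.1) + (y.2 - x.2) * (y.2 - x.2))).
    split; apply: (mulIf hq); rewrite mulrAC divfK //.
    + have E : (v.1 - u.1) * ((y.1 - x.1) * (y.1 - x.1) + (y.2 - x.2) * (y.2 - x.2))
           - ((v.1 - u.1) * (y.1 - x.1) + (v.2 - u.2) * (y.2 - x.2)) * (y.1 - x.1)
           = (y.2 - x.2) * ((v.1 - u.1) * (y.2 - x.2) - (v.2 - u.2) * (y.1 - x.1)) by ring.
      by move: E; rewrite hdet mulr0 => /eqP; rewrite subr_eq0 => /eqP.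
    + have E : (v.2 - u.2) * ((y.1 - x.1) * (y.1 - x.1) + (y.2 - x.2) * (y.2 - x.2))
           - ((v.1 - u.1) * (y.1 - x.1) + (v.2 - u.2) * (y.2 - x.2)) * (y.2 - x.2)
           = - (y.1 - x.1) * ((v.1 - u.1) * (y.2 - x.2) - (v.2 - u.2) * (y.1 - x.1)) by ring.
      by move: E; rewrite hdet mulr0 => /eqP; rewrite subr_eq0 => /eqP.
  have hs1 : s * (v.1 - u.1) = s * (k * (y.1 - x.1)) by rewrite hk1.
  have hs2 : s * (v.2 - u.2) = s * (k * (y.2 - x.2)) by rewrite hk2.
  have [mu emu] : exists mu, mu = t - s * k by exists (t - s * k).
  have hu : u = (x.1 + mu * (y.1 - x.1), x.2 + mu * (y.2 - x.2)).
    by rewrite emu; apply: pairE => /=; lra.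
  have hv : v = (x.1 + (mu + k) * (y.1 - x.1), x.2 + (mu + k) * (y.2 - x.2)).
    by rewrite emu; apply: pairE => /=; lra.
  have hx : x = (x.1 + 0 * (y.1 - x.1), x.2 + 0 * (y.2 - x.2)) by peq.
  have hy : y = (x.1 + 1 * (y.1 - x.1), x.2 + 1 * (y.2 - x.2)) by peq.
  have hz : z = (x.1 + t * (y.1 - x.1), x.2 + t * (y.2 - x.2)) by rewrite ez2 /comb; peq.
  have f1 : (mu <= 0 <= mu + k \/ mu + k <= 0 <= mu) -> (0 = mu \/ 0 = mu + k).
    move=> h; case: (seg1 u v x huv xP (line_seg hu hv hx h)) => e;
      [left; exact: (line_eq hx hu hq e) | right; exact: (line_eq hx hv hq e)].
  have f2 : (mu <= 1 <= mu + k \/ mu + k <= 1 <= mu) -> (1 = mu \/ 1 = mu + k).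
    move=> h; case: (seg1 u v y huv yP (line_seg hu hv hy h)) => e;
      [left; exact: (line_eq hy hu hq e) | right; exact: (line_eq hy hv hq e)].
  have f3 : (0 <= mu <= 1 \/ 1 <= mu <= 0) -> (mu = 0 \/ mu = 1).
    move=> h; case: (seg1 x y u hxy uP (line_seg hx hy hu h)) => e;
      [left; exact: (line_eq hu hx hq e) | right; exact: (line_eq hu hy hq e)].
  have f4 : (0 <= mu + k <= 1 \/ 1 <= mu + k <= 0) -> (mu + k = 0 \/ mu + k = 1).
    move=> h; case: (seg1 x y v hxy vP (line_seg hx hy hv h)) => e;
      [left; exact: (line_eq hv hx hq e) | right; exact: (line_eq hv hy hq e)].
  have nee : ~ ((mu = 0 /\ mu + k = 1) \/ (mu = 1 /\ mu + k = 0)).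
    case=> [[e e']|[e e']]; apply: hne; [left|right]; split.
    + by rewrite [in LHS]hu e; peq.
    + by rewrite [in LHS]hv e'; peq.
    + by rewrite [in LHS]hu e; peq.
    + by rewrite [in LHS]hv e'; peq.
  have hb : mu <= t <= mu + k \/ mu + k <= t <= mu.
    exact: betw hs emu.
  have zE : forall l (A : pt R), A = (x.1 + l * (y.1 - x.1), x.2 + l * (y.2 - x.2)) ->
      t = l -> z = A by move=> l A -> <-.
  have [[T|T] [T'|T']] := oneD ht hb f1 f2 f3 f4 nee.
  + by split; [left; exact: zE hu T | left; exact: zE hx T'].
  + by split; [left; exact: zE hu T | right; exact: zE hy T'].
  + by split; [right; exact: zE hv T | left; exact: zE hx T'].
  + by split; [right; exact: zE hv T | right; exact: zE hy T'].
- have [al [be [hD1 hD2]]] : exists al be,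
     al * (v.1 - u.1) + be * (y.1 - x.1) = wa.1 - wb.1 /\
     al * (v.2 - u.2) + be * (y.2 - x.2) = wa.2 - wb.2.
    exists (((wa.1 - wb.1) * (y.2 - x.2) - (wa.2 - wb.2) * (y.1 - x.1)) /
      ((v.1 - u.1) * (y.2 - x.2) - (v.2 - u.2) * (y.1 - x.1))).
    exists (((v.1 - u.1) * (wa.2 - wb.2) - (v.2 - u.2) * (wa.1 - wb.1)) /
      ((v.1 - u.1) * (y.2 - x.2) - (v.2 - u.2) * (y.1 - x.1))).
    by split; field.
  have KA : convex (translate C wa) by exact: translate_convex.
  have Au : translate C wa u by apply/(Ha u uP); left.
  have Av : translate C wa v by apply/(Ha v vP); right.
  have AQ1 : translate C wa (x.1 + (wa.1 - wb.1), x.2 + (wa.2 - wb.2)).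
    by apply: shift; apply/(Hb x xP); left.
  have AQ2 : translate C wa (y.1 + (wa.1 - wb.1), y.2 + (wa.2 - wb.2)).
    by apply: shift; apply/(Hb y yP); right.
  have shared : (u = x \/ u = y) \/ (v = x \/ v = y).
    have := @cross4 R _ ((1-t) * x.1 + t * y.1) ((1-t) * x.2 + t * y.2)
      (v.1-u.1) (v.2-u.2) (y.1-x.1) (y.2-x.2) al be s t u v
      (x.1 + (wa.1 - wb.1), x.2 + (wa.2 - wb.2)) (y.1 + (wa.1 - wb.1), y.2 + (wa.2 - wb.2)) x y
      (u.1 + (wa.1 - wb.1), u.2 + (wa.2 - wb.2)) (v.1 + (wa.1 - wb.1), v.2 + (wa.2 - wb.2))
      KA hs ht
      ltac:(apply: pairE => /=; lra) ltac:(apply: pairE => /=; lra)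
      ltac:(apply: pairE => /=; lra) ltac:(apply: pairE => /=; lra)
      ltac:(apply: pairE => /=; lra) ltac:(apply: pairE => /=; lra)
      ltac:(apply: pairE => /=; lra) ltac:(apply: pairE => /=; lra)
      Au Av AQ1 AQ2.
    case=> [Ax|[Ay|[Au'|Av']]].
    + by case: ((Ha x xP).1 Ax) => ->; [left; left | right; left].
    + by case: ((Ha y yP).1 Ay) => ->; [left; right | right; right].
    + by case: ((Hb u uP).1 (unshift Au')) => ->; [left; left | left; right].
    + by case: ((Hb v vP).1 (unshift Av')) => ->; [right; left | right; right].
  case: shared => [[e|e]|[e|e]].
  + subst x. have s0 : s = 0.
      apply: (indep (ta := - t) _ _ hdet); lra.
    have zu : z = u by rewrite ez1 s0 /comb; peq.
    by split; left.
  + subst y. have s0 : s = 0.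
      apply: (indep (ta := 1 - t) _ _ hdet); lra.
    have zu : z = u by rewrite ez1 s0 /comb; peq.
    by split; [left | right].
  + subst x. have s0 : 1 - s = 0.
      apply: (indep (ta := t) _ _ hdet); lra.
    have zu : z = v by rewrite ez1 (_ : s = 1) ?/comb; [peq | lra].
    by split; [right | left].
  + subst y. have s0 : 1 - s = 0.
      apply: (indep (ta := - (1 - t)) _ _ hdet); lra.
    have zu : z = v by rewrite ez1 (_ : s = 1) ?/comb; [peq | lra].
    by split; right.
Qed.

Theorem mainTheorem1 (R : realType) (C : pt R -> Prop) (P : seq (pt R)) :
  convex C -> plane_drawing P (Gt_adj P C).
Proof.
move=> cC.
have seg1 : forall u v w, Gt_adj P C u v -> w \in P -> on_seg u v w -> w = u \/ w = v.
  move=> u v w [uP [vP [_ [a Ha]]]] wP hw; apply/(Ha w wP).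
  apply: (@seg_in R _ u v w (@translate_convex R C a cC)) => //.
  - by apply/(Ha u uP); left.
  - by apply/(Ha v vP); right.
split.
- move=> u v w huv wP wu wv hw.
  by case: (seg1 _ _ _ huv wP hw).
- move=> u v x y z huv hxy hne hz1 hz2.
  exact: (part2 cC seg1 huv hxy hne hz1 hz2).
Qed.
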